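(* Let $G=(V,E)$ be a 3-connected, transient, simple planar graph with bounded vertex degree and locally finite dual that is circle packed in $\mathbb{H}^2$, and let $\mathcal{A}$ be a nonempty proper closed subset of $\partial\mathbb{H}^2$. If $f\in\mathbf{HD}(G)$ and $f\in\mathcal{R}_{\mathcal{A}}$, then for almost every singly infinite path $(\gamma(n))_{n\ge0}$ with $\lim_{n\to\infty}d_m(\gamma(n),z)=0$ for some $z\in\mathcal A$, we have $\lim_{n\to\infty}f(\gamma(n))=0$.
   Context: Circle packing: vertices are the Euclidean centers of circles of a packing of the unit disk with tangency graph $G$, $r_v$ the radius; $m(e)=r_u+r_v$; $d_m$ its path metric; topological notions near $\partial\mathbb{H}^2$ with respect to $d_m$ (in its completion). Conductances $C:E\to(0,\infty)$. A function $F$ is harmonic if $F(v)=\sum_{e=(v,w)}C(e)F(w)/\sum_{e\ni v}C(e)$, Dirichlet if $\sum_{e=(u,v)}C(e)(F(u)-F(v))^2<\infty$; $\mathbf D(G)$, $\mathbf{HD}(G)$ are the Dirichlet and harmonic Dirichlet functions. With the norm $\|u\|=\sqrt{\mathcal E(\nabla u)+u(b_0)^2}$ ($b_0$ a fixed vertex), $\mathcal R_{\mathcal A}=\mathbf{HD}(G)\cap\overline{\mathcal T}$ where $\overline{\mathcal T}$ is the closure of the set of $f\in\mathbf D(G)$ such that every $z\in\mathcal A$ has an open neighborhood $U_z$ with $\mathrm{supp}f\cap U_z=\emptyset$. A family of paths is null if some $q:E\to(0,\infty)$ with $\sum_eC(e)q(e)^2<\infty$ gives each of its paths infinite $q$-length;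 ''almost every path'' means outside a null subfamily. *)

(* Defs.v *)
From HB Require Import structures.
From mathcomp Require Import all_boot all_order all_algebra.
From mathcomp Require Import all_classical all_reals all_analysis.
Set Implicit Arguments. Unset Strict Implicit. Unset Printing Implicit Defensive.
Import Order.TTheory GRing.Theory Num.Theory.
Import numFieldNormedType.Exports.
Local Open Scope classical_set_scope.
Local Open Scope ring_scope.

Section Defs.
Variable R : realType.
Variable V : countType.

Definition eucl_dist (p q : R * R) : R :=
  Num.sqrt ((p.1 - q.1) ^+ 2 + (p.2 - q.2) ^+ 2).

Definition origin : R * R := (0, 0).
(** the open unit disk (= H^2) and the unit circle (= boundary of H^2) *)
Definition unit_disk : set (R * R) := [set p | eucl_dist p origin < 1].
Definition unit_circle : set (R * R) := [set p | eucl_dist p origin = 1].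

Variable nb : V -> seq V.
Definition adj : rel V := fun u v => v \in nb u.
Definition edges : set (V * V) := [set p | adj p.1 p.2].

Variables (c : V -> R * R) (r : V -> R).
Definition disk (v : V) : set (R * R) := [set p | eucl_dist p (c v) <= r v].
Definition disks_union : set (R * R) := \bigcup_(v in [set: V]) disk v.

Definition circle_packing : Prop :=
  [/\ (forall v, 0 < r v),
      (forall v, eucl_dist (c v) origin + r v < 1),
      (forall u v, u != v -> r u + r v <= eucl_dist (c u) (c v)),
      (forall u v, adj u v <-> (u != v /\ eucl_dist (c u) (c v) = r u + r v)) &
      (forall u, uniq (nb u))].

Definition interstice (K : set (R * R)) : Prop :=
  exists2 x, (unit_disk `\` disks_union) x &
    K = connected_component (unit_disk `\` disks_union) x.

(** The packing fills the unit disk (carrier = H^2): it is locally finite in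
    the disk and every interstice is relatively compact in the disk. *)
Definition packed_in_H2 : Prop :=
  circle_packing /\
  (forall rho : R, rho < 1 ->
     finite_set [set v | exists p, eucl_dist p origin <= rho /\ disk v p]) /\
  (forall K, interstice K -> closure K `<=` unit_disk).

(** locally finite dual: every face (interstice) is bounded by finitely many
    circles *)
Definition locally_finite_dual : Prop :=
  forall K, interstice K -> finite_set [set v | closure K `&` disk v !=set0].

Definition bounded_degree : Prop := exists D : nat, forall v, (size (nb v) <= D)%N.

Definition avoids (a b : V) (u : V) (p : seq V) : Prop :=
  all (fun x => (x != a) && (x != b)) (u :: p).

Definition three_connected : Prop :=
  forall a b u v, u != a -> u != b -> v != a -> v != b ->
    exists p : seq V, [/\ path adj u p, last u p = v & avoids a b u p].

Variable C : V -> V -> R.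
Definition conductances : Prop :=
  forall u v, adj u v -> 0 < C u v /\ C u v = C v u.

Definition piC (v : V) : R := \sum_(w <- nb v) C v w.

Fixpoint pstep (n : nat) (v w : V) : R :=
  match n with
  | 0 => if v == w then 1 else 0
  | n'.+1 => \sum_(u <- nb v) (C v u / piC v) * pstep n' u w
  end.

(** transient: the Green function (expected number of visits) is finite *)
Definition transient : Prop :=
  forall v, (\sum_(n <oo) (pstep n v v)%:E < +oo)%E.

Definition net_harmonic (F : V -> R) : Prop :=
  forall v, F v = (\sum_(w <- nb v) C v w * F w) / (\sum_(w <- nb v) C v w).

(** Dirichlet energy: sum over undirected edges (= half the sum over ordered
    adjacent pairs). *)
Definition energy (F : V -> R) : \bar R :=
  ((2^-1)%:E * \esum_(p in edges) (C p.1 p.2 * (F p.1 - F p.2) ^+ 2)%:E)%E.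

Definition dirichlet (F : V -> R) : Prop := (energy F < +oo)%E.

(** the edge metric m(e) = r_u + r_v and its path metric d_m *)
Fixpoint wlen (x : V) (p : seq V) : R :=
  match p with
  | [::] => 0
  | y :: p' => r x + r y + wlen y p'
  end.

Definition dm (u v : V) : R :=
  inf [set l | exists p : seq V, [/\ path adj u p, last u p = v & l = wlen u p]].

Definition dm_cauchy (s : nat -> V) : Prop :=
  forall eps : R, 0 < eps -> exists N, forall n m, (N <= n)%N -> (N <= m)%N ->
    dm (s n) (s m) < eps.

Definition econv (s : nat -> R * R) (z : R * R) : Prop :=
  forall eps : R, 0 < eps -> exists N, forall n, (N <= n)%N -> eucl_dist (s n) z < eps.

(** [s] converges in the d_m-completion to a point lying over [z]:
    it is d_m-Cauchy and the circle centres converge to [z]. *)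
Definition dm_conv_to (s : nat -> V) (z : R * R) : Prop :=
  dm_cauchy s /\ econv (fun n => c (s n)) z.

(** T: Dirichlet functions whose support avoids a d_m-neighbourhood (in the
    completion) of every point of A. *)
Definition in_T (A : set (R * R)) (F : V -> R) : Prop :=
  dirichlet F /\
  forall z, A z -> forall s : nat -> V, dm_conv_to s z ->
    exists2 eps : R, 0 < eps & exists N, forall n, (N <= n)%N ->
      forall v, F v != 0 -> eps <= dm v (s n).

(** closure of T for the norm ||u||^2 = E(grad u) + u(b0)^2 *)
Definition in_closure_T (b0 : V) (A : set (R * R)) (F : V -> R) : Prop :=
  forall eps : R, 0 < eps -> exists2 g, in_T A g &
    (energy (fun v => (F v - g v)%R) + ((F b0 - g b0) ^+ 2)%:E < (eps ^+ 2)%:E)%E.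

Definition graph_path (g : nat -> V) : Prop := forall n, adj (g n) (g n.+1).

Definition null_family (P : set (nat -> V)) : Prop :=
  exists q : V -> V -> R,
    [/\ (forall u v, adj u v -> 0 < q u v),
        (forall u v, q u v = q v u),
        (\esum_(p in edges) (C p.1 p.2 * q p.1 p.2 ^+ 2)%:E < +oo)%E &
        (forall g, P g -> \sum_(n <oo) (q (g n) (g n.+1))%:E = +oo)%E].

End Defs.

(* Main.v *)
Require Import Defs.
From HB Require Import structures.
From mathcomp Require Import all_boot all_order all_algebra.
From mathcomp Require Import all_classical all_reals all_analysis.
From mathcomp.algebra_tactics Require Import ring lra.
Import Order.TTheory GRing.Theory Num.Theory.
Import numFieldNormedType.Exports.
Set Implicit Arguments. Unset Strict Implicit. Unset Printing Implicit Defensive.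
Local Open Scope classical_set_scope.
Local Open Scope ring_scope.

Lemma geo_partial (R : realType) (a y : R) n : 0 <= a -> 0 <= y -> y < 1 ->
  \sum_(0 <= k < n) (a * y ^+ k) <= a / (1 - y).
Proof.
move=> a0 y0 y1.
have h1 : 0 < 1 - y by rewrite subr_gt0.
elim: n => [|n IH].
  by rewrite big_nil divr_ge0 // ltW.
rewrite big_nat_recl // expr0 mulr1.
under eq_bigr do rewrite exprS mulrCA.
rewrite -mulr_sumr.
have : y * (\sum_(0 <= i < n) a * y ^+ i) <= y * (a / (1 - y)) by rewrite ler_wpM2l.
move=> H.
have -> : a / (1 - y) = a + y * (a / (1 - y)).
  by field; rewrite subr_eq0 eq_sym lt_eqF.
by rewrite lerD2l.
Qed.

Lemma geo_series (R : realType) (a y : R) : 0 <= a -> 0 <= y -> y < 1 ->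
  (\sum_(k <oo) (a * y ^+ k)%:E <= (a / (1 - y))%:E)%E.
Proof.
move=> a0 y0 y1.
have H n : (0 <= (a * y ^+ n)%:E)%E by rewrite lee_fin mulr_ge0 // exprn_ge0.
apply: (lime_le (is_cvg_nneseries_cond (fun n _ _ => H n))).
apply: nearW => n /=; rewrite sumEFin lee_fin; exact: geo_partial.
Qed.

Lemma esum_scale_le (R : realType) (T : choiceType) (I : set T) (c : R)
  (a : T -> \bar R) : 0 <= c -> (forall i, I i -> (0 <= a i)%E) ->
  (\esum_(i in I) (c%:E * a i) <= c%:E * \esum_(i in I) a i)%E.
Proof.
move=> c0 a0; apply: ge_ereal_sup => _ [X [finX XI] <-] /=.
rewrite fsbig_finite //= big_seq -ge0_sume_distrr; last first.
  by move=> i; rewrite in_fset_set // inE => /XI /a0.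
rewrite -big_seq.
apply: lee_wpmul2l; first by rewrite lee_fin.
rewrite -fsbig_finite //; apply: ereal_sup_ubound; exists X => //.
Qed.

Lemma esum_single (R : realType) (T : choiceType) (I : set T) (a : T -> \bar R) e :
  I e -> (forall i, I i -> (0 <= a i)%E) -> (a e <= \esum_(i in I) a i)%E.
Proof.
move=> Ie a0; apply: esum_ge; exists [set e].
  rewrite /fsets /=; split; [exact: finite_set1 | by move=> x ->].
by rewrite fsbig_set1.
Qed.

Lemma esum_series (R : realType) (T : choiceType) (I : set T) (t : T -> nat -> \bar R) :
  (forall e k, I e -> (0 <= t e k)%E) ->
  \esum_(e in I) (\sum_(k <oo) t e k)%E = (\sum_(k <oo) \esum_(e in I) t e k)%E.
Proof.
move=> t0.
rewrite nneseries_esumT; last by move=> n; apply: esum_ge0 => e Ie; exact: t0.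
rewrite (eq_esum (b := fun e => \esum_(k in [set: nat]) t e k)); last first.
  by move=> e Ie; rewrite nneseries_esumT // => k; exact: t0.
rewrite !esum_esum //; last by move=> e k Ie _; exact: t0.
rewrite (reindex_esum ([set: nat] `*`` (fun=> I)) _ (fun x => (x.2, x.1))) //.
split => //=.
- by move=> [k e] [/= _ Ie]; split.
- by move=> [k1 e1] [k2 e2] /= _ _ [-> ->].
- by move=> [e k] [/= Ie _]; exists (k, e).
- by move=> k e _ Ie; exact: t0.
Qed.

Lemma esum_inj_geo (R : realType) (T : choiceType) (I : set T) (f : T -> nat) (c : R) :
  0 <= c -> injective f ->
  (\esum_(p in I) (c * (2^-1) ^+ (f p))%:E < +oo)%E.
Proof.
move=> c0 finj.
have h0 j : (0 <= (c * (2^-1 : R) ^+ j)%:E)%E.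
  by rewrite lee_fin mulr_ge0 // exprn_ge0 // invr_ge0.
rewrite -(esum_image I f (fun j => (c * (2^-1) ^+ j)%:E)); last by move=> x y _ _ /finj.
rewrite esum_mkcond.
apply: (@le_lt_trans _ _ (\esum_(j in [set: nat]) (c * (2^-1 : R) ^+ j)%:E)).
  by apply: le_esum => j _; case: ifP => _ //.
rewrite -nneseries_esumT //.
have y0 : (0 : R) <= 2^-1 by rewrite invr_ge0.
have y1 : (2^-1 : R) < 1 by rewrite invf_lt1 // ltr1n.
have G := @geo_series R c (2^-1) c0 y0 y1. apply: le_lt_trans G _.
by rewrite ltry.
Qed.

Fixpoint qlen (R : realType) (V : Type) (Q : V -> V -> R) (x : V) (p : seq V) : R :=
  match p with
  | [::] => 0
  | y :: p' => Q x y + qlen Q y p'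
  end.

Lemma path_bound (R : realType) (V : Type) (e : rel V) (F : V -> R) (Q : V -> V -> R) x p :
  path e x p -> (forall u v, e u v -> `|F u - F v| <= Q u v) ->
  `|F x - F (last x p)| <= qlen Q x p.
Proof.
elim: p x => [|y p IH] x /=; first by rewrite subrr normr0.
move=> /andP[exy pp] HQ.
apply: le_trans (ler_distD (F y) _ _) _.
by apply: lerD; [exact: HQ | exact: IH].
Qed.

Lemma seq_bound (R : realType) (V : Type) (e : rel V) (F : V -> R) (Q : V -> V -> R)
  (g : nat -> V) m :
  (forall n, e (g n) (g n.+1)) -> (forall u v, e u v -> `|F u - F v| <= Q u v) ->
  `|F (g 0%N) - F (g m)| <= \sum_(0 <= n < m) Q (g n) (g n.+1).
Proof.
move=> ge HQ; elim: m => [|m IH]; first by rewrite subrr normr0 big_nil.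
rewrite big_nat_recr //=.
apply: le_trans (ler_distD (F (g m)) _ _) _.
by apply: lerD; [exact: IH | exact: HQ].
Qed.

Lemma wlen_ge0 (R : realType) (V : countType) (r : V -> R) x p :
  (forall v, 0 < r v) -> 0 <= wlen r x p.
Proof.
move=> r0; elim: p x => [|y p IH] x //=.
by rewrite addr_ge0 // addr_ge0 // ltW.
Qed.

Lemma dm_self (R : realType) (V : countType) nb (r : V -> R) u :
  (forall v, 0 < r v) -> dm nb r u u <= 0.
Proof.
move=> r0; rewrite /dm; apply: ge_inf.
  by exists 0 => l [p [_ _ ->]]; exact: wlen_ge0.
by exists [::].
Qed.

Theorem corollary3p10 (R : realType) (V : countType) (nb : V -> seq V)
  (c : V -> R * R) (r : V -> R) (C : V -> V -> R) (b0 : V)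
  (A : set (R * R)) (f : V -> R) :
  packed_in_H2 nb c r ->
  three_connected nb ->
  bounded_degree nb ->
  locally_finite_dual c r ->
  conductances nb C ->
  transient nb C ->
  A !=set0 -> A `<` (@unit_circle R) -> closed A ->
  net_harmonic nb C f -> dirichlet nb C f -> in_closure_T nb c r C b0 A f ->
  null_family nb C
    [set g | graph_path nb g /\ (exists2 z, A z & dm_conv_to nb c r g z) /\
             ~ ((fun n => f (g n)) @ \oo --> (0 : R))].
Proof.
move=> [[Hr Hin Hsep Hadj Huniq] _] H3c _ _ HC _ _ _ _ _ _ Hclos.
have edsym (p q : R * R) : eucl_dist p q = eucl_dist q p.
  by case: p q => [a b] [a' b']; rewrite /eucl_dist /= -(sqrrN (a - a')) -(sqrrN (b - b')) !opprB.
have adjS u v : adj nb u v -> adj nb v u.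
  move=> /Hadj [uv d]; apply/Hadj; split; first by rewrite eq_sym.
  by rewrite edsym d addrC.
have adj_neq u v : adj nb u v -> u != v by move=> /Hadj [].
pose lam (k : nat) : R := 2 ^+ k.
have lam_gt0 k : 0 < lam k by rewrite exprn_gt0.
have lam_ge1 k : 1 <= lam k by rewrite exprn_ege1 // ler1n.
pose e (k : nat) : R := (lam k ^+ 2)^-1.
have e_gt0 k : 0 < e k by rewrite invr_gt0 exprn_gt0.
have : forall k, exists g, in_T nb c r C A g /\
    (energy nb C (fun v => (f v - g v)%R) + ((f b0 - g b0) ^+ 2)%R%:E < (e k ^+ 2)%:E)%E.
  by move=> k; have [g Tg Hg] := Hclos (e k) (e_gt0 k); exists g.
move=> /choice [g Hg].
pose h k v := f v - g k v.
have Eb k : (\esum_(p in edges nb) (C p.1 p.2 * (h k p.1 - h k p.2) ^+ 2)%:E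
     <= (2 * e k ^+ 2)%:E)%E.
  have [_ Hk] := Hg k.
  have En : (energy nb C (fun v => (f v - g k v)%R) <= (e k ^+ 2)%:E)%E.
    by apply: ltW; apply: le_lt_trans Hk; rewrite leeDl // lee_fin sqr_ge0.
  rewrite EFinM.
  apply: le_trans (lee_wpmul2l _ En); last by rewrite lee_fin.
  by rewrite /energy muleA -EFinM divff // mul1e.
have E0 k : (0 <= \esum_(p in edges nb) (C p.1 p.2 * (h k p.1 - h k p.2) ^+ 2)%:E)%E.
  apply: esum_ge0 => p /= Hp; rewrite lee_fin mulr_ge0 // ?sqr_ge0 //.
  exact: ltW (HC _ _ Hp).1.
have Bb k : `|h k b0| * lam k <= 1.
  have [_ Hk] := Hg k.
  have En0 : (0 <= energy nb C (fun v => (f v - g k v)%R))%E.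
    by rewrite /energy mule_ge0 // ?lee_fin ?invr_ge0 //; exact: E0.
  have H2 : (h k b0) ^+ 2 < e k ^+ 2.
    rewrite -lte_fin; apply: le_lt_trans Hk; exact: leeDr.
  have H3 : `|h k b0| < e k.
    have ek := e_gt0 k.
    rewrite ltr_norml; apply/andP; split; nra.
  have H4 : e k * lam k = (lam k)^-1.
    by rewrite /e; field; rewrite gt_eqF.
  apply: le_trans (_ : e k * lam k <= 1).
    by rewrite ler_pM2r // ltW.
  by rewrite H4 invf_le1.
have Tz k z (s : nat -> V) : A z -> dm_conv_to nb c r s z ->
    exists N, forall n, (N <= n)%N -> g k (s n) = 0.
  move=> Az sc; have [[_ HT] _] := Hg k.
  have [eps eps0 [N HN]] := HT z Az s sc.
  exists N => n Nn; apply/eqP; apply: contraT => gn.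
  have d1 := HN n Nn (s n) gn.
  have d2 := @dm_self R V nb r (s n) Hr.
  by have := le_trans d1 d2; rewrite leNgt eps0.
pose t k (p : V * V) : R := C p.1 p.2 * (lam k * (h k p.1 - h k p.2)) ^+ 2.
have t0 k p : edges nb p -> 0 <= t k p.
  by move=> Hp; rewrite /t mulr_ge0 ?sqr_ge0 // ltW // (HC _ _ Hp).1.
pose Sx (p : V * V) := (\sum_(k <oo) (t k p)%:E)%E.
have Sfin : (\esum_(p in edges nb) Sx p < +oo)%E.
  rewrite /Sx esum_series; last by move=> p k /(t0 k); rewrite lee_fin.
  have y0 : (0 : R) <= 4^-1 by rewrite invr_ge0.
  have y1 : (4^-1 : R) < 1 by rewrite invf_lt1 // ltr1n.
  have a0 : (0 : R) <= 2 by [].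
  apply: (@le_lt_trans _ _ (\sum_(k <oo) (2 * (4^-1) ^+ k)%:E)%E); last first.
    by apply: le_lt_trans (@geo_series R 2 (4^-1) a0 y0 y1) _; rewrite ltry.
  apply: lee_nneseries => [k _ _|k _].
    by apply: esum_ge0 => p /(t0 k); rewrite lee_fin.
  have -> : (fun p => (t k p)%:E) = (fun p => ((lam k ^+ 2)%:E * (C p.1 p.2 * (h k p.1 - h k p.2) ^+ 2)%:E)%E).
    by apply/funext => p; rewrite -EFinM /t exprMn mulrCA.
  apply: le_trans (esum_scale_le _ _) _.
  - by rewrite sqr_ge0.
  - by move=> p Hp; rewrite lee_fin mulr_ge0 ?sqr_ge0 // ltW // (HC _ _ Hp).1.
  apply: le_trans (lee_wpmul2l _ (Eb k)) _; first by rewrite lee_fin sqr_ge0.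
  rewrite -EFinM lee_fin /e.
  have -> : (4^-1 : R) ^+ k = (lam k ^+ 2)^-1.
    by rewrite /lam -exprM mulnC exprM exprVn (_ : (2:R) ^+ 2 = 4) // expr2 -natrM.
  have lk := lam_gt0 k.
  rewrite le_eqVlt; apply/orP; left; apply/eqP.
  field; rewrite expf_neq0 // gt_eqF //.
have Sx0 p : edges nb p -> (0 <= Sx p)%E.
  by move=> Hp; apply: nneseries_ge0 => k _ _; rewrite lee_fin t0.
have Sfine p : edges nb p -> Sx p \is a fin_num.
  move=> Hp; rewrite fin_numElt; apply/andP; split.
    by apply: lt_le_trans (Sx0 p Hp); rewrite ltNyr.
  apply: le_lt_trans Sfin; apply: (esum_single (a := Sx)) => //.
pose w (p : V * V) : R := (2^-1) ^+ (pickle p).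
have w0 p : 0 < w p by rewrite exprn_gt0 // invr_gt0.
have w1 p : w p <= 1 by rewrite exprn_ile1 // ?invr_ge0 // invf_le1 // ler1n.
pose D u v : R := 1 + `|C u v| + `|C v u|.
have D1 u v : 1 <= D u v by rewrite /D -addrA lerDl addr_ge0.
have DC u v : C u v <= D u v.
  rewrite /D; have := ler_norm (C u v); have := normr_ge0 (C v u); lra.
pose eps u v : R := (w (u, v) + w (v, u)) / D u v.
have eps0 u v : 0 < eps u v.
  have := D1 u v; have := w0 (u, v); have := w0 (v, u) => a b d.
  rewrite /eps divr_gt0 //; lra.
pose q u v : R := if adj nb u v then Num.sqrt (fine (Sx (u, v)) / C u v) + eps u v else 1.
have KB k u v : adj nb u v -> `|lam k * h k u - lam k * h k v| <= q u v.
  move=> uv; rewrite /q uv.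
  have ep : edges nb (u, v) by [].
  have Cp := (HC _ _ uv).1.
  have tS : t k (u, v) <= fine (Sx (u, v)).
    rewrite -lee_fin fineK ?Sfine //.
    apply: le_trans (nneseries_lim_ge (m := 0%N) k.+1 _); last first.
      by move=> n _ _; rewrite lee_fin t0.
    rewrite big_nat_recr //=; apply: leeDr.
    by apply: sume_ge0 => n _; rewrite lee_fin t0.
  have -> : `|lam k * h k u - lam k * h k v| = Num.sqrt (t k (u, v) / C u v).
    have -> : t k (u, v) / C u v = (lam k * (h k u - h k v)) ^+ 2.
      by rewrite /t /= mulrAC divff ?gt_eqF // mul1r.
    by rewrite sqrtr_sqr -mulrBr.
  apply: le_trans (_ : Num.sqrt (fine (Sx (u, v)) / C u v) <= _).
    rewrite ler_sqrt.
      by rewrite ler_wpM2r // invr_ge0 ltW.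
    by apply: divr_ge0; [apply: fine_ge0; exact: Sx0 | exact: ltW].
  by rewrite lerDl ltW.
exists q; split.
- by move=> u v uv; rewrite /q uv; have := sqrtr_ge0 (fine (Sx (u, v)) / C u v); have := eps0 u v; lra.
- move=> u v; rewrite /q; case: (boolP (adj nb u v)) => uv; last first.
    have vu : ~~ adj nb v u by apply: contra uv; exact: adjS.
    by rewrite (negbTE vu).
  have vu := adjS _ _ uv; rewrite vu.
  have -> : Sx (u, v) = Sx (v, u).
    apply: eq_eseriesr => k _; congr (_%:E).
    by rewrite /t /= (HC _ _ uv).2; ring.
  rewrite (HC _ _ uv).2; congr (_ + _).
  by rewrite /eps /D addrC; congr (_ / _); ring.
- apply: (@le_lt_trans _ _ (\esum_(p in edges nb)
     ((Sx p + Sx p) + ((4 * w p)%:E + (4 * w (p.2, p.1))%:E)))%E).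
    apply: le_esum => -[u v] /= uv.
    have ep : edges nb (u, v) by [].
    rewrite /q uv -(fineK (Sfine _ ep)) -!EFinD lee_fin.
    have Cp := (HC _ _ uv).1.
    set S := fine (Sx (u, v)).
    have S0 : 0 <= S by apply: fine_ge0; exact: Sx0.
    set s := Num.sqrt (S / C u v).
    have s0 : 0 <= s by exact: sqrtr_ge0.
    have Cs : C u v * s ^+ 2 = S.
      rewrite sqr_sqrtr; last by apply: divr_ge0 => //; exact: ltW.
      by rewrite mulrC divfK // gt_eqF.
    have e0 := eps0 u v.
    have eD : eps u v * D u v = w (u, v) + w (v, u).
      by rewrite /eps mulrVK // unitfE gt_eqF // (lt_le_trans ltr01 (D1 u v)).
    have wa := w0 (u, v); have wb := w0 (v, u); have wa1 := w1 (u, v); have wb1 := w1 (v, u).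
    have d1 := D1 u v; have dc := DC u v.
    have ele : eps u v <= w (u, v) + w (v, u) by nra.
    have Ce : C u v * eps u v ^+ 2 <= 2 * (w (u, v) + w (v, u)) by nra.
    have : C u v * (s + eps u v) ^+ 2 <= 2 * (C u v * s ^+ 2) + 2 * (C u v * eps u v ^+ 2).
      have : 0 <= C u v * (s - eps u v) ^+ 2 by rewrite mulr_ge0 ?sqr_ge0 // ltW.
      move=> H; nra.
    simpl; lra.
  rewrite esumD; last 2 first.
  + by move=> p Hp; rewrite adde_ge0 // Sx0.
  + by move=> p Hp; rewrite adde_ge0 // lee_fin mulr_ge0 // ltW.
  rewrite esumD; last 2 first.
  + by move=> p Hp; rewrite Sx0.
  + by move=> p Hp; rewrite Sx0.
  rewrite esumD; last 2 first.
  + by move=> p Hp; rewrite lee_fin mulr_ge0 // ltW.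
  + by move=> p Hp; rewrite lee_fin mulr_ge0 // ltW.
  apply: lte_add_pinfty; first exact: lte_add_pinfty.
  apply: lte_add_pinfty.
    by apply: (@esum_inj_geo R _ (edges nb) pickle 4) => //; exact: (pcan_inj pickleK).
  apply: (@esum_inj_geo R _ (edges nb) (fun p : V * V => pickle (p.2, p.1)) 4) => //.
  by move=> [a b] [a' b'] /(pcan_inj pickleK) [-> ->].
- move=> gm [gp [[z Az gz] ncv]].
  have [pth [pp pl]] : exists pth, path (adj nb) (gm 0%N) pth /\ last (gm 0%N) pth = b0.
    case: (eqVneq (gm 0%N) b0) => [<-|n0]; first by exists [::].
    case: (eqVneq (gm 1%N) b0) => [<-|n1].
      by exists [:: gm 1%N]; rewrite /= andbT; split => //; exact: gp.
    have n1' : b0 != gm 1%N by rewrite eq_sym.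
    have [pth [H1 H2 _]] := H3c (gm 1%N) (gm 1%N) (gm 0%N) b0 (adj_neq _ _ (gp 0%N))
       (adj_neq _ _ (gp 0%N)) n1' n1'.
    by exists pth.
  set L := qlen q (gm 0%N) pth.
  have HL k : `|lam k * h k (gm 0%N) - lam k * h k b0| <= L.
    by rewrite -pl; apply: path_bound pp (KB k).
  have [dl dl0 Hdl] : exists2 dl : R, 0 < dl & forall N, exists2 m, (N <= m)%N & dl <= `|f (gm m)|.
    apply: contra_notP ncv => H.
    apply/cvgrPdist_lt => ep ep0.
    have [N HN] : exists N, forall m, (N <= m)%N -> `|f (gm m)| < ep.
      apply: contra_notP H => H'; exists ep => // N.
      apply: contra_notP H' => H''; exists N => m Nm.
      rewrite ltNge; apply/negP => Hle; apply: H''; by exists m.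
    exists N => // m /= Nm; rewrite sub0r normrN; exact: HN.
  apply: eq_infty => M.
  set Y := (M + L + 1) / dl.
  have [k Hk] : exists k, M + L + 1 <= lam k * dl.
    exists (Num.trunc Y).
    have h1 := truncnS_gt Y.
    have h2 : ((Num.trunc Y).+1 <= 2 ^ Num.trunc Y)%N by exact: ltn_expl.
    have h3 : ((Num.trunc Y).+1%:R : R) <= lam (Num.trunc Y).
      by rewrite /lam -natrX ler_nat.
    have : Y <= lam (Num.trunc Y) by apply: ltW; apply: lt_le_trans h1 h3.
    rewrite ler_pdivrMr //.
  have [N HN] := Tz k z gm Az gz.
  have [m Nm Hm] := Hdl N.
  have hm : h k (gm m) = f (gm m) by rewrite /h HN // subr0.
  have q0 n : (0 <= (q (gm n) (gm n.+1))%:E)%E.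
    rewrite lee_fin /q (gp n) ; have := sqrtr_ge0 (fine (Sx (gm n, gm n.+1)) / C (gm n) (gm n.+1)).
    have := eps0 (gm n) (gm n.+1); lra.
  apply: le_trans (nneseries_lim_ge (m := 0%N) m (fun n _ _ => q0 n)).
  rewrite sumEFin lee_fin.
  have ps := seq_bound (F := fun v => lam k * h k v) m gp (KB k).
  simpl in ps.
  rewrite hm in ps.
  have n1 := lerB_dist (lam k * f (gm m)) (lam k * h k (gm 0%N)).
  have n2 := lerB_dist (lam k * h k (gm 0%N)) (lam k * h k b0).
  have lk := lam_gt0 k.
  rewrite distrC in n1.
  rewrite !normrM !(gtr0_norm lk) in n1 n2.
  have HL' := HL k.
  have Bk := Bb k.
  have : lam k * dl <= lam k * `|f (gm m)| by rewrite ler_pM2l.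
  move=> H5.
  have : `|h k b0| * lam k = lam k * `|h k b0| by rewrite mulrC.
  lra.
Qed.
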